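(* Let $\tilde i\ge1$ be an integer and let $\alpha_0,\alpha_1,\dots,\alpha_{\tilde i+1}$ be positive real numbers. Then $$\sum_{i=1}^{\tilde i+1}\left[\prod_{j=i+1}^{\tilde i+1}\left(\frac{\alpha_{j-1}}{\alpha_j}\right)^{2^{\tilde i-j+2}}\right]\left(\alpha_i^{2^{\tilde i-i+2}-1}-\alpha_{i-1}^{2^{\tilde i-i+2}-1}\right)\alpha_i^{-2^{\tilde i-i+2}}\le\alpha_{\tilde i+1}^{-1}.$$
   Context: An empty product (when $i=\tilde i+1$) equals $1$. *)

(* Defs.v *)
From mathcomp Require Import all_boot all_order all_algebra.

(* Main.v *)
Require Import Defs.
From mathcomp Require Import all_boot all_order all_algebra.
From mathcomp Require Import ring lra zify.
Import Order.TTheory GRing.Theory Num.Theory.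
Local Open Scope ring_scope.

Lemma tele (R : zmodType) (Q : nat -> R) m :
  \sum_(0 <= i < m) (Q i.+1 - Q i) = Q m - Q 0%N.
Proof.
elim: m => [|m IH]; first by rewrite big_geq // subrr.
rewrite big_nat_recr //= IH; by rewrite addrC addrA subrK.
Qed.

Lemma termeq (R : fieldType) (P x y : R) m : x != 0 -> y != 0 ->
  P * (x ^+ (m.+1 - 1) - y ^+ (m.+1 - 1)) * x ^- m.+1
  = P / x - (y / x) ^+ m.+1 * P / y.
Proof.
move=> hx hy; rewrite subn1 /= exprMn exprVn !exprS.
have hxm : x ^+ m != 0 by rewrite expf_neq0.
move: hxm; set z := x ^+ m; set w := y ^+ m => hz. field. by rewrite hx hz hy.
Qed.

Theorem lemma9 (R : realFieldType) (it : nat) (a : nat -> R)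
  (hit : (1 <= it)%N) (ha : forall k, (k <= it.+1)%N -> 0 < a k) :
  \sum_(1 <= i < it.+2)
     (\prod_(i.+1 <= j < it.+2) (a j.-1 / a j) ^+ (2 ^ (it.+2 - j)))
     * (a i ^+ (2 ^ (it.+2 - i) - 1) - a i.-1 ^+ (2 ^ (it.+2 - i) - 1))
     * a i ^- (2 ^ (it.+2 - i))
  <= (a it.+1)^-1.
Proof.
set F := fun j => (a j.-1 / a j) ^+ (2 ^ (it.+2 - j)).
set Q := fun i => (\prod_(i.+1 <= j < it.+2) F j) / a i.
have -> : \sum_(1 <= i < it.+2)
     (\prod_(i.+1 <= j < it.+2) (a j.-1 / a j) ^+ (2 ^ (it.+2 - j)))
     * (a i ^+ (2 ^ (it.+2 - i) - 1) - a i.-1 ^+ (2 ^ (it.+2 - i) - 1))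
     * a i ^- (2 ^ (it.+2 - i)) = \sum_(0 <= i < it.+1) (Q i.+1 - Q i).
  rewrite big_add1 /=.
  rewrite !big_nat; apply: eq_bigr => i /andP[_ hi].
  have hx : a i.+1 != 0 by rewrite gt_eqF // ha.
  have hy : a i != 0 by rewrite gt_eqF // ha // ltnW.
  have [m hm] : exists m, (2 ^ (it.+2 - i.+1) = m.+1)%N.
    by exists (2 ^ (it.+2 - i.+1)).-1; rewrite prednK // expn_gt0.
  rewrite hm termeq // /Q /= (@big_ltn _ _ _ i.+1) //= /F /= hm.
  by [].
rewrite (tele _ Q) /Q big_geq // div1r lerBlDr lerDl.
apply: divr_ge0; last by apply: ltW; apply: ha.
rewrite big_seq; apply: prodr_ge0 => j; rewrite mem_index_iota => /andP[_ hj].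
apply: exprn_ge0; apply: divr_ge0; apply: ltW; apply: ha; lia.
Qed.
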